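(* Consider a run of Algorithm 1 (described in the context) against an adversary making at most $C$ corruptions. The total absolute loss $\sum |f(x_t)-q_t|$ over all rounds $t$ lying in corrupted intervals is at most $L\cdot O(C\log T)$, with an absolute constant.
   Context: Problem. Fix $L>0$ and $T\ge 2$. An adversary fixes an unknown $L$-Lipschitz $f:[0,1]\to[0,L]$. In each round $t=1,\dots,T$: the adversary chooses $x_t\in[0,1]$; the learner observes $x_t$ and guesses $q_t$; the adversary observes $q_t$ and sends $\sigma_t\in\{0,1\}$, equal to $\sigma(q_t-f(x_t))$ in uncorrupted rounds and $1-\sigma(q_t-f(x_t))$ in corrupted rounds, where $\sigma(u)=1$ if $u>0$ and $0$ if $u\le 0$; the adversary chooses adaptively which rounds to corrupt, at most $C$ in total ($C$ unknown to the learner). The absolute loss of round $t$ is $|f(x_t)-q_t|$. $\mathtt{len}(I)$ is the length of an interval $I$. $\mathtt{MidpointQuery}(I,Y)$, $Y=[a,b]$: guess $q=(a+b)/2$; if $\sigma_t=1$ return $Y\cap[0,q+L\,\mathtt{len}(I)]$, if $\sigma_t=0$ return $Y\cap[q-L\,\mathtt{len}(I),L]$. Algorithm 1. Maintain a partition of $[0,1]$ into intervals; each $I_j$ carries a checking interval $S_j$, range $Y_j$, and a ''dubious'' flag (initially unset). Initially: $8$ intervals of length $1/8$ (the root intervals), each with $S_j=Y_j=[0,L]$. In round $t$, with $I_j$ the partition interval containing $x_t$: (i) if some endpoint of $S_j$ has not been guessed in a round whose context lay in $I_j$, guess such an endpoint; if the guess was $\min(S_j)$ with $\sigma_t=1$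 or $\max(S_j)$ with $\sigma_t=0$, mark $I_j$ dubious; once both endpoints have been queried, set $Y_j=[0,L]$ if dubious and otherwise $Y_j=[\min(S_j)-L\,\mathtt{len}(I_j),\max(S_j)+L\,\mathtt{len}(I_j)]\cap[0,L]$. (ii) Otherwise set $Y_j:=\mathtt{MidpointQuery}(I_j,Y_j)$; if then $\mathtt{len}(Y_j)<\max(4L\,\mathtt{len}(I_j),4L/T)$, bisect $I_j$ into its two halves (its children), which replace it, each with checking interval equal to the current $Y_j$ (endpoints unqueried, not dubious). Interval types. Say a round $t$ lies in $I_j$ if $I_j$ is the partition interval containing $x_t$ at round $t$. An interval $I_j$ is corrupted if some round lying in $I_j$ has a corrupted signal. *)

(* Defs.v *)
From Stdlib Require Import Reals Lra List Arith Bool.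
Open Scope bool_scope.
Open Scope R_scope.

(* A node (d,k) denotes the dyadic interval [k/2^d, (k+1)/2^d] of length 1/2^d.
   The partition intervals of Algorithm 1 are always such nodes (roots: depth 3). *)

(* index of the depth-d dyadic interval containing x (left-closed, right-open
   convention; x = 1 goes to the rightmost interval). *)
Fixpoint addr (x : R) (d : nat) : nat :=
  match d with
  | O => O
  | S d' => let k := addr x d' in
            if Rlt_dec x ((2 * INR k + 1) / 2 ^ (S d')) then (2 * k)%nat
            else (2 * k + 1)%nat
  end.

Definition len_node (d : nat) : R := / 2 ^ d.

Record state := mkState {
  spl  : nat -> nat -> bool;
  Slo  : nat -> nat -> R;      (* checking interval S = [Slo, Shi] *)
  Shi  : nat -> nat -> R;
  Ylo  : nat -> nat -> R;      (* range Y = [Ylo, Yhi] *)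
  Yhi  : nat -> nat -> R;
  qmin : nat -> nat -> bool;   (* min S already guessed in this interval *)
  qmax : nat -> nat -> bool;   (* max S already guessed in this interval *)
  dub  : nat -> nat -> bool
}.

Definition upd {A : Type} (g : nat -> nat -> A) (d k : nat) (v : A) :
  nat -> nat -> A :=
  fun d' k' => if Nat.eqb d' d && Nat.eqb k' k then v else g d' k'.

Definition init_state (L : R) : state :=
  mkState (fun _ _ => false) (fun _ _ => 0) (fun _ _ => L)
          (fun _ _ => 0) (fun _ _ => L)
          (fun _ _ => false) (fun _ _ => false) (fun _ _ => false).

(* depth of the partition interval containing x: descend from the root
   intervals (depth 3) through bisected nodes.  The fuel T suffices since at
   most one bisection happens per round. *)
Fixpoint leaf_depth (st : state) (x : R) (fuel d : nat) : nat :=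
  match fuel with
  | O => d
  | S n => if spl st d (addr x d) then leaf_depth st x n (S d) else d
  end.

Definition sigma (u : R) : bool := if Rlt_dec 0 u then true else false.

Definition signal (f : R -> R) (x q : R) (corrupt : bool) : bool :=
  xorb (sigma (q - f x)) corrupt.

(* One round of Algorithm 1. Returns new state, the guess q_t, and the node
   (partition interval) in which the round lies. *)
Definition step (L : R) (T : nat) (f : R -> R) (st : state) (x : R)
  (corrupt : bool) : state * R * (nat * nat) :=
  let d := leaf_depth st x T 3 in
  let k := addr x d in
  let len := len_node d in
  let a := Slo st d k in
  let b := Shi st d k in
  if negb (qmin st d k && qmax st d k) then
    (* (i) checking step; min endpoint is guessed first *)
    let q := if qmin st d k then b else a in
    let s := signal f x q corrupt in
    let qmin' := true in
    let qmax' := qmin st d k in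
    let dub' := dub st d k || (if qmin st d k then negb s else s) in
    let ylo := if qmax' then (if dub' then 0 else Rmax (a - L * len) 0)
               else Ylo st d k in
    let yhi := if qmax' then (if dub' then L else Rmin (b + L * len) L)
               else Yhi st d k in
    (mkState (spl st) (Slo st) (Shi st)
       (upd (Ylo st) d k ylo) (upd (Yhi st) d k yhi)
       (upd (qmin st) d k qmin') (upd (qmax st) d k qmax')
       (upd (dub st) d k dub'), q, (d, k))
  else
    let ya := Ylo st d k in
    let yb := Yhi st d k in
    let q := (ya + yb) / 2 in
    let s := signal f x q corrupt in
    let ylo := if s then Rmax ya 0 else Rmax ya (q - L * len) in
    let yhi := if s then Rmin yb (q + L * len) else Rmin yb L in
    if Rlt_dec (yhi - ylo) (Rmax (4 * L * len) (4 * L / INR T)) then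
      let c1 := (2 * k)%nat in
      let c2 := (2 * k + 1)%nat in
      let d1 := S d in
      let up2 {A : Type} (g : nat -> nat -> A) (v : A) :=
        upd (upd g d1 c1 v) d1 c2 v in
      (mkState (upd (spl st) d k true)
         (up2 (Slo st) ylo) (up2 (Shi st) yhi)
         (up2 (upd (Ylo st) d k ylo) ylo) (up2 (upd (Yhi st) d k yhi) yhi)
         (up2 (qmin st) false) (up2 (qmax st) false) (up2 (dub st) false),
       q, (d, k))
    else
      (mkState (spl st) (Slo st) (Shi st)
         (upd (Ylo st) d k ylo) (upd (Yhi st) d k yhi)
         (qmin st) (qmax st) (dub st), q, (d, k)).

(* state before round t (rounds indexed 0..T-1); x t = context of round t,
   c t = whether round t is corrupted. *)
Fixpoint run (L : R) (T : nat) (f : R -> R) (x : nat -> R) (c : nat -> bool)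
  (t : nat) : state :=
  match t with
  | O => init_state L
  | S t' => fst (fst (step L T f (run L T f x c t') (x t') (c t')))
  end.

Definition guess L T f x c t : R := snd (fst (step L T f (run L T f x c t) (x t) (c t))).
Definition node_of L T f x c t : nat * nat := snd (step L T f (run L T f x c t) (x t) (c t)).

Definition node_eqb (n m : nat * nat) : bool :=
  Nat.eqb (fst n) (fst m) && Nat.eqb (snd n) (snd m).

Definition corrupted_node L T f x c (n : nat * nat) : bool :=
  existsb (fun t => node_eqb (node_of L T f x c t) n && c t) (seq 0 T).

Definition loss_in_corrupted L T f x c : R :=
  fold_right Rplus 0
    (map (fun t => Rabs (f (x t) - guess L T f x c t))
       (filter (fun t => corrupted_node L T f x c (node_of L T f x c t)) (seq 0 T))).

(* Main.v *)
Require Import Defs.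
From Stdlib Require Import Reals List Arith Lia Lra Bool FunctionalExtensionality.
Open Scope R_scope.


Lemma div2_2k k : ((2*k)/2 = k)%nat.
Proof. rewrite Nat.mul_comm, Nat.div_mul by lia. reflexivity. Qed.
Lemma div2_2k1 k : ((2*k+1)/2 = k)%nat.
Proof. rewrite Nat.add_comm, Nat.mul_comm, Nat.div_add by lia. reflexivity. Qed.
Lemma div2_inv k k' : (k'/2 = k)%nat -> (k' = 2*k \/ k' = 2*k+1)%nat.
Proof. intros. pose proof (Nat.div_mod k' 2). pose proof (Nat.mod_upper_bound k' 2). lia. Qed.

Lemma addr_div2 x d : ((addr x (S d)) / 2 = addr x d)%nat.
Proof. simpl. destruct Rlt_dec; [apply div2_2k|apply div2_2k1]. Qed.

Lemma leaf_prop st x fuel : forall d0, let r := leaf_depth st x fuel d0 in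
  (d0 <= r <= d0 + fuel)%nat /\
  (r = d0 \/ (d0 < r)%nat /\ spl st (r-1) (addr x r / 2) = true) /\
  (spl st r (addr x r) = false \/ r = (d0 + fuel)%nat).
Proof.
  induction fuel; intros d0; cbn [leaf_depth].
  - split; [lia|]. split; [auto| right; lia].
  - destruct (spl st d0 (addr x d0)) eqn:E.
    + destruct (IHfuel (S d0)) as [H1 [H2 H3]].
      set (r := leaf_depth st x fuel (S d0)) in *.
      split; [lia|]. split.
      * right. split; [lia|]. destruct H2 as [H2|[H2 H4]].
        -- rewrite H2. replace (S d0 - 1)%nat with d0 by lia. rewrite addr_div2. exact E.
        -- exact H4.
      * destruct H3; [left; auto | right; lia].
    + split; [lia|]. split; auto.
Qed.

Definition B (T : nat) : R := 3 + ln (INR T) / ln (3/2).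

Lemma ln32_pos : 0 < ln (3/2).
Proof. rewrite <- ln_1. apply ln_increasing; lra. Qed.

Lemma m_bound L T m : 0 < L -> (0 < T)%nat -> 4 * L / INR T <= L * (2/3)^m ->
  INR m <= ln (INR T) / ln (3/2).
Proof.
  intros HL HT H.
  assert (HTr : 0 < INR T) by (apply lt_0_INR; lia).
  assert (H1 : 4 / INR T <= (2/3)^m).
  { apply Rmult_le_reg_l with L; auto. unfold Rdiv in *. lra. }
  assert (H2 : (3/2)^m <= INR T).
  { assert (Hp : (3/2)^m * (2/3)^m = 1).
    { rewrite <- Rpow_mult_distr. replace (3/2*(2/3)) with 1 by field. apply pow1. }
    assert (0 < (3/2)^m) by (apply pow_lt; lra).
    assert (4 <= INR T * (2/3)^m).
    { apply Rmult_le_compat_l with (r := INR T) in H1; [|lra].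
      field_simplify in H1; lra. }
    nra. }
  assert (H3 : INR m * ln (3/2) <= ln (INR T)).
  { rewrite <- ln_pow by lra. destruct H2 as [H2|H2].
    - left. apply ln_increasing; auto. apply pow_lt; lra.
    - rewrite H2; lra. }
  pose proof ln32_pos.
  apply Rmult_le_reg_r with (ln (3/2)); auto. unfold Rdiv. rewrite Rmult_assoc, Rinv_l; lra.
Qed.

Record Inv (L : R) (T : nat) (st : state) (t : nat) (cnt : nat -> nat -> nat) : Prop := {
 i_bnd : forall d k, (0 <= Slo st d k <= L /\ 0 <= Shi st d k <= L) /\ (0 <= Ylo st d k <= L /\ 0 <= Yhi st d k <= L);
 i_spl : forall d k, spl st d k = true -> (3 <= d < 3 + t)%nat;
 i_par : forall d k, ~ (d = 3%nat \/ (3 < d)%nat /\ spl st (d-1) (k/2) = true) -> cnt d k = 0%nat /\ spl st d k = false;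
 i_q0 : forall d k, spl st d k = false -> qmin st d k = false -> cnt d k = 0%nat /\ qmax st d k = false;
 i_q1 : forall d k, spl st d k = false -> qmin st d k = true -> qmax st d k = false -> cnt d k = 1%nat;
 i_q2 : forall d k, spl st d k = false -> qmin st d k = true -> qmax st d k = true ->
    (2 <= cnt d k)%nat /\ Yhi st d k - Ylo st d k <= L * (2/3)^(cnt d k - 2) /\
    (cnt d k = 2%nat \/ 4*L/INR T <= Yhi st d k - Ylo st d k);
 i_cnt : forall d k, INR (cnt d k) <= B T }.

Lemma B_ge3 T : (2 <= T)%nat -> 3 <= B T.
Proof.
  intros. unfold B. assert (0 <= ln (INR T)).
  { rewrite <- ln_1. destruct (Req_dec (INR T) 1). rewrite H0; lra. left. apply ln_increasing. lra.
    assert (1 <= INR T) by (apply (le_INR 1); lia). lra. }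
  pose proof ln32_pos. assert (0 <= ln (INR T) / ln (3/2)) by (unfold Rdiv; apply Rmult_le_pos; [lra| left; apply Rinv_0_lt_compat; lra]). lra.
Qed.

Lemma hit_cnt L T c w : 0 < L -> (2 <= T)%nat -> (2 <= c)%nat -> w <= L * (2/3)^(c-2) ->
  (c = 2%nat \/ 4*L/INR T <= w) -> INR (c + 1) <= B T.
Proof.
  intros HL HT H1 H2 H3.
  replace (c+1)%nat with ((c-2)+3)%nat by lia. rewrite plus_INR.
  replace (INR 3) with 3 by (simpl; lra).
  destruct H3 as [H3|H3].
  - subst. simpl. pose proof (B_ge3 T HT). lra.
  - assert (INR (c-2) <= ln (INR T) / ln (3/2)) by (apply (m_bound L); [auto|lia|lra]).
    unfold B. lra.
Qed.

Lemma width_true ya yb a : Rmin yb ((ya+yb)/2 + a) - Rmax ya 0 <= (yb - ya)/2 + a.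
Proof. pose proof (Rmin_r yb ((ya+yb)/2 + a)). pose proof (Rmax_l ya 0). lra. Qed.
Lemma width_false ya yb a L : Rmin yb L - Rmax ya ((ya+yb)/2 - a) <= (yb - ya)/2 + a.
Proof. pose proof (Rmin_l yb L). pose proof (Rmax_r ya ((ya+yb)/2 - a)). lra. Qed.

Lemma div2_back k k' : (k' = 2*k \/ k' = 2*k+1)%nat -> (k'/2 = k)%nat.
Proof. intros [->| ->]; [apply div2_2k|apply div2_2k1]. Qed.

Ltac cases0 d' k' := repeat match goal with |- context [Nat.eqb ?a ?b] => destruct (Nat.eqb_spec a b) end;
  cbn [andb] in *; try (exfalso; lia);
  try subst d'; try subst k'.

Ltac brute := repeat match goal with |- context [if ?b then _ else _] => destruct b end;
  unfold Rmax, Rmin in *; repeat match goal with |- context [Rle_dec ?a ?b] => destruct (Rle_dec a b) end; lra.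

Lemma step_inv L T f st t cnt x cr st' q n :
  0 < L -> (2 <= T)%nat -> (t < T)%nat -> Inv L T st t cnt ->
  step L T f st x cr = (st', q, n) ->
  Inv L T st' (S t) (fun d' k' => (cnt d' k' + if node_eqb n (d',k') then 1 else 0)%nat) /\ 0 <= q <= L.
Proof.
  intros HL HT Ht I Hs.
  unfold step in Hs.
  pose proof (leaf_prop st x T 3) as LP. cbv zeta in LP.
  set (d := leaf_depth st x T 3) in *.
  set (k := addr x d) in *.
  assert (Hsd : spl st d k = false).
  { destruct LP as [H1 [H2 [H3|H3]]]; auto. destruct H2 as [H2|[H2 H4]]. lia.
    apply (i_spl _ _ _ _ _ I) in H4. lia. }
  assert (Hpd : d = 3%nat \/ (3 < d)%nat /\ spl st (d-1) (k/2) = true) by (destruct LP as [_ [[H|H] _]]; auto).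
  assert (Hd3 : (3 <= d)%nat) by lia.
  clearbody d k. clear LP.
  pose proof (div2_2k k). pose proof (div2_2k1 k).
  assert (((k + (k+0))/2 = k)%nat) by (replace (k+(k+0))%nat with (2*k)%nat by lia; auto).
  assert (((k + (k+0)+1)/2 = k)%nat) by (replace (k+(k+0)+1)%nat with (2*k+1)%nat by lia; auto).
  destruct I as [Ib Isp Ipa Iq0 Iq1 Iq2 Ic].
  assert (Hdt : (d < 3 + S t)%nat).
  { destruct Hpd as [->|[_ Hs']]; [lia| apply Isp in Hs'; lia]. }
  assert (Hch : forall k', (k'/2 = k)%nat -> cnt (S d) k' = 0%nat /\ spl st (S d) k' = false).
  { intros k' Hk. apply Ipa. intros [Hc|[_ Hc]]; [lia|]. replace (S d - 1)%nat with d in Hc by lia.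
    rewrite Hk in Hc. congruence. }
  assert (HLn : 0 < L * len_node d).
  { unfold len_node. apply Rmult_lt_0_compat; auto. apply Rinv_0_lt_compat, pow_lt; lra. }
  assert (HT0 : 0 < INR T) by (apply lt_0_INR; lia).
  pose proof (Ib d k) as Ibd.
  destruct (qmin st d k) eqn:E1; destruct (qmax st d k) eqn:E2; cbn [negb andb] in Hs;
  [| |destruct (Iq0 d k Hsd E1) as [_ E]; congruence|].
  all: match type of Hs with context [signal ?a ?b ?c ?e] => destruct (signal a b c e) end.
  all: try (match type of Hs with context [Rlt_dec ?a ?b] => destruct (Rlt_dec a b) as [Hlt|Hlt] end).
  all: inversion Hs; subst; clear Hs.
  all: split; [constructor; intros d' k'; unfold upd, node_eqb; cbn [Slo Shi Ylo Yhi spl qmin qmax dub fst snd]|].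
  all: try solve [lra].
  all: try solve [pose proof (Ib d' k') as Ibd'; cases0 d' k'; brute].
  all: try solve [cases0 d' k'; intros Hs'; first [lia | apply Isp in Hs'; lia]].
  all: try solve [intros HnP;
    assert (HnP0 : ~ (d' = 3%nat \/ (3 < d')%nat /\ spl st (d'-1) (k'/2) = true)) by
      (intros [Z1|[Z1 Z2]]; apply HnP; [left; exact Z1| right; split; [exact Z1|]; rewrite Z2;
        repeat match goal with |- context [if ?c then _ else _] => destruct c end; reflexivity]);
    destruct (Ipa _ _ HnP0) as [Hc Hsp]; clear HnP;
    cases0 d' k'; first [ exfalso; apply HnP0; exact Hpd | rewrite Hc, ?Hsp; auto ]].
  all: try solve [cases0 d' k'; intros Hs' Hq'; first [congruence | rewrite Nat.add_0_r; apply Iq0; auto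
     | rewrite Nat.add_0_r; split; [apply (proj1 (Hch _ ltac:(auto))) | reflexivity]]].
  all: try solve [cases0 d' k'; intros Hs' Hq1 Hq2; first [congruence | rewrite Nat.add_0_r; apply Iq1; auto
     | destruct (Iq0 d k Hsd E1); lia]].
  all: try solve [cases0 d' k'; first [rewrite Nat.add_0_r; apply Ic 
     | destruct (Iq0 d k Hsd E1) as [-> _]; pose proof (B_ge3 T HT); simpl; lra
     | rewrite (Iq1 d k Hsd E1 E2); pose proof (B_ge3 T HT); simpl; lra
     | destruct (Iq2 d k Hsd E1 E2) as [A1 [A2 A3]]; exact (hit_cnt L T _ _ HL HT A1 A2 A3)]].
  all: try solve [cases0 d' k'; intros Hs' Hq1 Hq2; first [congruence | rewrite Nat.add_0_r; apply Iq2; auto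
     | rewrite (Iq1 d k Hsd E1 E2); split; [lia|]; split; [simpl; brute | left; reflexivity]
     | destruct (Iq2 d k Hsd E1 E2) as [A1 [A2 A3]];
       assert (Hw : forall w, 4 * L * len_node d <= w -> 4 * L / INR T <= w -> w <= (Yhi st d k - Ylo st d k)/2 + L * len_node d ->
          (2 <= cnt d k + 1)%nat /\ w <= L * (2/3)^(cnt d k + 1 - 2) /\ ((cnt d k + 1 = 2)%nat \/ 4 * L / INR T <= w))
         by (intros w W1 W2 W3; split; [lia|]; split; [|right; exact W2];
             replace (cnt d k + 1 - 2)%nat with (S (cnt d k - 2)) by lia; simpl; lra);
       apply Hw; [apply Rnot_lt_le in Hlt; pose proof (Rmax_l (4 * L * len_node d) (4 * L / INR T)); lra
                 |apply Rnot_lt_le in Hlt; pose proof (Rmax_r (4 * L * len_node d) (4 * L / INR T)); lra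
                 |first [apply width_true | apply width_false]]]].
  all: cases0 d' k'; intros Hs' Hq'.
  all: try congruence.
  all: try (rewrite Nat.add_0_r; first [ apply Iq0; auto | split; [eapply proj1, Hch, div2_back; lia | reflexivity]]).
Qed.

Definition cntf L T f x c t := fun d k =>
  length (filter (fun s => node_eqb (node_of L T f x c s) (d,k)) (seq 0 t)).

Lemma init_inv L T : 0 < L -> (2 <= T)%nat -> Inv L T (init_state L) 0 (fun _ _ => 0%nat).
Proof.
  intros HL HT. constructor; simpl; intros; try lra; try discriminate; auto.
  pose proof (B_ge3 T HT). simpl. lra.
Qed.

Lemma run_inv L T f x c : 0 < L -> (2 <= T)%nat -> forall t, (t <= T)%nat ->
  Inv L T (run L T f x c t) t (cntf L T f x c t) /\
  (forall s, (s < t)%nat -> 0 <= guess L T f x c s <= L).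
Proof.
  intros HL HT. induction t; intros Ht.
  - split; [|intros; lia].
    replace (cntf L T f x c 0) with (fun _ _ : nat => 0%nat) by reflexivity.
    apply init_inv; auto.
  - destruct IHt as [I G]; [lia|].
    destruct (step L T f (run L T f x c t) (x t) (c t)) as [[st' q] n] eqn:E.
    destruct (step_inv L T f _ t _ (x t) (c t) st' q n HL HT ltac:(lia) I E) as [I' Hq].
    assert (Hr : run L T f x c (S t) = st') by (simpl; rewrite E; reflexivity).
    assert (Hn : node_of L T f x c t = n) by (unfold node_of; rewrite E; reflexivity).
    assert (Hg : guess L T f x c t = q) by (unfold guess; rewrite E; reflexivity).
    split.
    + rewrite Hr.
      replace (cntf L T f x c (S t)) with
        (fun d' k' => (cntf L T f x c t d' k' + if node_eqb n (d',k') then 1 else 0)%nat); auto.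
      apply functional_extensionality; intro d'; apply functional_extensionality; intro k'.
      unfold cntf. rewrite seq_S, filter_app, length_app. simpl. rewrite Hn.
      destruct (node_eqb n (d',k')); reflexivity.
    + intros s Hs. destruct (Nat.eq_dec s t) as [->|]; [rewrite Hg; auto| apply G; lia].
Qed.

Lemma filter_or_len (l : list nat) (p q : nat -> bool) :
  (length (filter (fun t => p t || q t) l) <= length (filter p l) + length (filter q l))%nat.
Proof.
  induction l; simpl; auto. destruct (p a), (q a); simpl; lia.
Qed.

Lemma count_exists (l A : list nat) (h : nat -> nat -> bool) :
  (length (filter (fun t => existsb (fun s => h s t) A) l) <=
   fold_right plus 0%nat (map (fun s => length (filter (h s) l)) A))%nat.
Proof.
  induction A; simpl.
  - induction l; simpl; auto.
  - eapply Nat.le_trans; [apply (filter_or_len l (h a) (fun t => existsb (fun s => h s t) A))|]. lia.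
Qed.

Lemma sum_INR (A : list nat) (g : nat -> nat) :
  INR (fold_right plus 0%nat (map g A)) = fold_right Rplus 0 (map (fun s => INR (g s)) A).
Proof. induction A; simpl; auto. rewrite plus_INR, IHA. reflexivity. Qed.

Lemma sum_le (A : list nat) (g h : nat -> R) : (forall s, In s A -> g s <= h s) ->
  fold_right Rplus 0 (map g A) <= fold_right Rplus 0 (map h A).
Proof. induction A; simpl; intros H; [lra|]. pose proof (H a (or_introl eq_refl)).
  assert (fold_right Rplus 0 (map g A) <= fold_right Rplus 0 (map h A)) by (apply IHA; auto). lra. Qed.

Lemma sum_if (A : list nat) (c : nat -> bool) b :
  fold_right Rplus 0 (map (fun s => if c s then b else 0) A) = b * INR (length (filter c A)).
Proof. induction A; simpl; [lra|]. rewrite IHA. destruct (c a); cbn [filter length]; [rewrite S_INR|]; lra. Qed.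

Lemma sum_const_bound (l : list nat) (g : nat -> R) b : (forall s, In s l -> g s <= b) ->
  fold_right Rplus 0 (map g l) <= b * INR (length l).
Proof. induction l; cbn [map fold_right length]; intros H; [simpl; lra|]. rewrite S_INR.
  pose proof (H a (or_introl eq_refl)). assert (fold_right Rplus 0 (map g l) <= b * INR (length l)) by (apply IHl; intros; apply H; simpl; auto). rewrite Rmult_plus_distr_l, Rmult_1_r. lra. Qed.

Lemma node_eqb_sym n m : node_eqb n m = node_eqb m n.
Proof. unfold node_eqb. rewrite (Nat.eqb_sym (fst n)), (Nat.eqb_sym (snd n)). reflexivity. Qed.

Lemma filter_andb_false (l : list nat) (p : nat -> bool) :
  filter (fun t => p t && false) l = nil.
Proof. induction l; simpl; auto. rewrite andb_false_r. auto. Qed.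

Lemma filter_andb_true (l : list nat) (p : nat -> bool) :
  filter (fun t => p t && true) l = filter p l.
Proof. induction l; simpl; auto. rewrite andb_true_r, IHl. auto. Qed.

Theorem lemma25 :
  exists K : R, 0 < K /\
  forall (L : R) (T C : nat) (f : R -> R) (x : nat -> R) (c : nat -> bool),
    0 < L -> (2 <= T)%nat ->
    (forall u v, 0 <= u <= 1 -> 0 <= v <= 1 -> Rabs (f u - f v) <= L * Rabs (u - v)) ->
    (forall u, 0 <= u <= 1 -> 0 <= f u <= L) ->
    (forall t, (t < T)%nat -> 0 <= x t <= 1) ->
    (length (filter c (seq 0 T)) <= C)%nat ->
    loss_in_corrupted L T f x c <= K * L * (INR C * ln (INR T)).
Proof.
  assert (Hl2 : 0 < ln 2) by (rewrite <- ln_1; apply ln_increasing; lra).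
  pose proof ln32_pos as Hl3.
  exists (3 / ln 2 + 1 / ln (3/2)). split.
  { assert (0 < 3 / ln 2) by (unfold Rdiv; apply Rmult_lt_0_compat; [lra|apply Rinv_0_lt_compat; lra]).
    assert (0 < 1 / ln (3/2)) by (unfold Rdiv; apply Rmult_lt_0_compat; [lra|apply Rinv_0_lt_compat; lra]).
    lra. }
  intros L T C f x c HL HT _ Hf Hx HC.
  destruct (run_inv L T f x c HL HT T (Nat.le_refl T)) as [I G].
  set (g := fun t => Rabs (f (x t) - guess L T f x c t)).
  set (h := fun s t => node_eqb (node_of L T f x c s) (node_of L T f x c t) && c s).
  set (BT := B T).
  assert (S1 : loss_in_corrupted L T f x c <=
     L * INR (length (filter (fun t => existsb (fun s => h s t) (seq 0 T)) (seq 0 T)))).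
  { unfold loss_in_corrupted. apply sum_const_bound.
    intros s Hs. apply filter_In in Hs. destruct Hs as [Hs _]. apply in_seq in Hs.
    pose proof (Hf (x s) (Hx s ltac:(lia))). pose proof (G s ltac:(lia)).
    apply Rabs_le. lra. }
  assert (S2 : INR (length (filter (fun t => existsb (fun s => h s t) (seq 0 T)) (seq 0 T))) <=
     BT * INR (length (filter c (seq 0 T)))).
  { eapply Rle_trans; [apply le_INR, count_exists|].
    rewrite sum_INR, <- sum_if. apply sum_le. intros s _.
    unfold h. destruct (c s).
    - rewrite filter_andb_true.
      destruct (node_of L T f x c s) as [d k] eqn:En.
      pose proof (i_cnt _ _ _ _ _ I d k) as Hc. unfold cntf in Hc.
      replace (filter (fun t => node_eqb (d, k) (node_of L T f x c t)) (seq 0 T)) with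
        (filter (fun t => node_eqb (node_of L T f x c t) (d, k)) (seq 0 T)); [exact Hc|].
      apply filter_ext. intros; apply node_eqb_sym.
    - rewrite filter_andb_false. simpl. lra. }
  assert (S3 : INR (length (filter c (seq 0 T))) <= INR C) by (apply le_INR; auto).
  assert (HT2 : ln 2 <= ln (INR T)).
  { assert (2 <= INR T) by (apply (le_INR 2); auto).
    destruct (Req_dec (INR T) 2) as [E|E]; [rewrite E; lra|]. left; apply ln_increasing; lra. }
  assert (HB : BT <= (3 / ln 2 + 1 / ln (3/2)) * ln (INR T)).
  { unfold BT, B. rewrite Rmult_plus_distr_r.
    assert (3 <= 3 / ln 2 * ln (INR T)).
    { unfold Rdiv. rewrite Rmult_assoc. apply Rmult_le_reg_l with (ln 2); auto.
      replace (ln 2 * (3 * (/ ln 2 * ln (INR T)))) with (3 * ln (INR T)) by (field; lra). nra. }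
    replace (1 / ln (3/2) * ln (INR T)) with (ln (INR T) / ln (3/2)) by (field; lra). lra. }
  assert (HBpos : 0 <= BT) by (unfold BT; pose proof (B_ge3 T HT); lra).
  assert (0 <= INR C) by apply pos_INR.
  assert (0 <= INR (length (filter c (seq 0 T)))) by apply pos_INR.
  assert (S4 : BT * INR (length (filter c (seq 0 T))) <= (3 / ln 2 + 1 / ln (3/2)) * ln (INR T) * INR C).
  { apply Rle_trans with (BT * INR C); [apply Rmult_le_compat_l; auto|].
    apply Rmult_le_compat_r; auto. }
  eapply Rle_trans; [exact S1|].
  replace ((3 / ln 2 + 1 / ln (3/2)) * L * (INR C * ln (INR T))) with
    (L * ((3 / ln 2 + 1 / ln (3/2)) * ln (INR T) * INR C)) by ring.
  apply Rmult_le_compat_l; [lra|]. lra.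
Qed.
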